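(* Let $N>0$, let $\langle k\rangle>1$ (the average node degree), and let $\beta>0$, $\gamma\ge 0$, $p\ge 0$ be parameters. Consider the mean-field ODE system in which the numbers of susceptible nodes $S$, infected nodes $I$, active susceptible–susceptible edges $[SS]$ and active susceptible–infected edges $[SI]$ satisfy $$\dot S=-\beta[SI],\qquad \dot I=\beta[SI]-\gamma I,$$ $$\dot{[SI]}=\beta\left(\frac{\langle k\rangle-1}{\langle k\rangle}\,\frac{[SS][SI]-[SI]^2}{S}-[SI]\right)-(\gamma+p)[SI],$$ with initial data depending on $I_0\in(0,N/4)$ given by $S(0)=N-I_0$, $I(0)=I_0$, $[SI](0)=\langle k\rangle I_0$, $[SS](0)=\frac{\langle k\rangle N}{2}-\langle k\rangle I_0$. Then $$\lim_{I_0\to 0}\frac{1}{I_0}\dot{[SI]}(0)=\beta\left(\frac{\langle k\rangle^2}{2}-\frac32\langle k\rangle\right)-(\gamma+p)\langle k\rangle,$$ and, setting $$p_1^*=\beta\left(\frac{\langle k\rangle}{2}-\frac32\right)-\gamma,$$ if $p>p_1^*$ then $\lim_{I_0\to 0}\frac{1}{I_0}\ddot S(0)>0$ (where $\ddot S(0)$ is computed from the system above, i.e. $\ddot S(0)=-\beta\,\dot{[SI]}(0)$).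
   Context: This is an SIR epidemic on an adaptive network with temporary link deactivation: susceptible–infected edges are deactivated at rate $p$, infection occurs at rate $\beta$ along active $[SI]$ edges, and infected nodes recover at rate $\gamma$. The equation for $[SI]$ arises from the edge equation $\dot{[SI]}=\beta[SSI]-\beta([SI]+[ISI])-\gamma[SI]-p[SI]$ closed by the moment closure $[ABC]\approx\frac{\langle k\rangle-1}{\langle k\rangle}\frac{[AB][BC]}{B}$ for triple links. The total number of edges is $\bar N=\langle k\rangle N/2=[SS](0)+[SI](0)$. *)

(* Defs.v *)
From HB Require Import structures.
From mathcomp Require Import all_boot all_order all_algebra.
From mathcomp Require Import all_classical all_reals all_analysis.
Set Implicit Arguments. Unset Strict Implicit. Unset Printing Implicit Defensive.
Import Order.TTheory GRing.Theory Num.Theory.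
Import numFieldNormedType.Exports.
Local Open Scope ring_scope.

Definition SI_rhs {R : realType} (beta gamma p k S SS SI : R) : R :=
  beta * ((k - 1) / k * ((SS * SI - SI ^+ 2) / S) - SI) - (gamma + p) * SI.

Definition S_init {R : realType} (N I0 : R) : R := N - I0.
Definition SS_init {R : realType} (k N I0 : R) : R := k * N / 2 - k * I0.
Definition SI_init {R : realType} (k I0 : R) : R := k * I0.

Definition dSI0 {R : realType} (N k beta gamma p I0 : R) : R :=
  SI_rhs beta gamma p k (S_init N I0) (SS_init k N I0) (SI_init k I0).

(* d^2 S/dt^2 at t = 0: since dS/dt = -beta [SI], S'' = -beta [SI]'. *)
Definition ddS0 {R : realType} (N k beta gamma p I0 : R) : R :=
  - beta * dSI0 N k beta gamma p I0.

Definition p1_star {R : realType} (k beta gamma : R) : R :=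
  beta * (k / 2 - 3 / 2) - gamma.

(* Main.v *)
Require Import Defs.
From HB Require Import structures.
From mathcomp Require Import all_boot all_order all_algebra.
From mathcomp Require Import all_classical all_reals all_analysis.
From mathcomp Require Import ring lra.
Import Order.TTheory GRing.Theory Num.Theory.
Import numFieldNormedType.Exports.
Local Open Scope classical_set_scope.
Local Open Scope ring_scope.

Lemma key_lim (R : realType) (N k beta gamma p : R) :
  0 < N -> 1 < k ->
  (fun I0 => dSI0 N k beta gamma p I0 / I0) @ 0^'+ -->
      beta * (k ^+ 2 / 2 - 3 / 2 * k) - (gamma + p) * k.
Proof.
move=> N0 k1.
pose g := fun x : R => beta * ((k - 1) * (k * N / 2 - 2 * k * x) * (N - x)^-1 - k) - (gamma + p) * k.
have -> : beta * (k ^+ 2 / 2 - 3 / 2 * k) - (gamma + p) * k = g 0.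
  rewrite /g; field; by rewrite lt0r_neq0 // subr0.
have gc : g x @[x --> 0^'+] --> g 0.
  apply: cvg_within_filter.
  rewrite /g; apply: cvgB; last exact: cvg_cst.
  apply: cvgMl_tmp; apply: cvgB; last exact: cvg_cst.
  apply: cvgM.
    apply: cvgMl_tmp; apply: cvgB; first exact: cvg_cst.
    apply: cvgMl_tmp; exact: cvg_id.
  apply: cvgV; first by rewrite subr0 lt0r_neq0.
  apply: cvgB; [exact: cvg_cst| exact: cvg_id].
apply: cvg_trans gc; apply: near_eq_cvg.
near=> x.
have x0 : 0 < x by near: x; exact: nbhs_right_gt.
have xN : x < N by near: x; exact: nbhs_right_lt.
rewrite /g /dSI0 /SI_rhs /S_init /SS_init /SI_init.
have k0 : k != 0 by rewrite lt0r_neq0 // (lt_trans ltr01 k1).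
have Nx : N - x != 0 by rewrite subr_eq0 gt_eqF.
field; apply/and3P; split => //; exact: lt0r_neq0.
Unshelve. all: by end_near.
Qed.

Theorem mainTheorem1 (R : realType) (N k beta gamma p : R) :
  0 < N -> 1 < k -> 0 < beta -> 0 <= gamma -> 0 <= p ->
  ((fun I0 => dSI0 N k beta gamma p I0 / I0) @ 0^'+ -->
      beta * (k ^+ 2 / 2 - 3 / 2 * k) - (gamma + p) * k)
  /\
  (p1_star k beta gamma < p ->
     exists l : R,
       ((fun I0 => ddS0 N k beta gamma p I0 / I0) @ 0^'+ --> l) /\ 0 < l).
Proof.
move=> N0 k1 b0 g0 p0; split; first exact: key_lim.
move=> hp; exists (- beta * (beta * (k ^+ 2 / 2 - 3 / 2 * k) - (gamma + p) * k)).
split.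
  have -> : (fun I0 => ddS0 N k beta gamma p I0 / I0) =
     (fun I0 => - beta * (dSI0 N k beta gamma p I0 / I0)).
    by apply/funext => x; rewrite /ddS0 mulrA.
  apply: cvgMl_tmp; exact: key_lim.
move: hp; rewrite /p1_star => hp.
have k0 : 0 < k by rewrite (lt_trans ltr01 k1).
have : beta * (k / 2 - 3 / 2) - gamma - p < 0 by lra.
move=> h.
have -> : - beta * (beta * (k ^+ 2 / 2 - 3 / 2 * k) - (gamma + p) * k)
   = beta * k * - (beta * (k / 2 - 3 / 2) - gamma - p) by ring.
apply: mulr_gt0; first exact: mulr_gt0.
by rewrite oppr_gt0.
Qed.
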